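(* Let $q>1$, $0<u<1$ and let $k\ge1$ be an integer. Then \[ \sum_{\lambda:\lambda'_1=k}N_{u,q}(\lambda)=\frac{u^{k-1}}{|A(k-1,q)|}\cdot\frac{\prod_{r=1}^\infty(1-u/q^r)}{\prod_{r=1}^k(1-u/q^r)}, \] the sum being over partitions with exactly $k$ parts.
   Context: $|A(k-1,q)|=q^{k-1}\prod_{i=0}^{k-2}(q^{k-1}-q^i)$ (the order of the affine group $A(k-1,q)$ when $q$ is a prime power). $\lambda'_1$ is the number of parts of $\lambda$. $N_{u,q}(\lambda)=\prod_{r\ge1}(1-u/q^r)\frac{u^{|\lambda|-1}(q^{\lambda'_1}-1)}{\prod_i q^{(\lambda'_i)^2}(\frac1q)_{m_i(\lambda)}}$ for partitions of positive integers, with $\lambda'$ the conjugate partition, $m_i(\lambda)$ the multiplicity of part $i$, $(\frac1q)_i=\prod_{j=1}^i(1-q^{-j})$. *)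

(* Defs.v *)
From HB Require Import structures.
From mathcomp Require Import all_boot all_order all_algebra.
From mathcomp Require Import all_classical all_reals all_analysis.
Set Implicit Arguments. Unset Strict Implicit. Unset Printing Implicit Defensive.
Import Order.TTheory GRing.Theory Num.Theory.
Local Open Scope ring_scope.

Definition is_partition (l : seq nat) : bool :=
  sorted geq l && all (fun x => 0 < x)%N l.

Definition psize (l : seq nat) : nat := sumn l.

Definition pconj (l : seq nat) (i : nat) : nat := count (fun x => i <= x)%N l.

Definition pmult (l : seq nat) (i : nat) : nat := count (pred1 i) l.

Definition qpoch (R : realType) (q : R) (i : nat) : R :=
  \prod_(1 <= j < i.+1) (1 - (q ^+ j)^-1).

Definition qinf (R : realType) (u q : R) : R :=
  limn (fun n => \prod_(1 <= r < n.+1) (1 - u / q ^+ r)).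

Definition affine_order (R : realType) (n : nat) (q : R) : R :=
  q ^+ n * \prod_(0 <= i < n) (q ^+ n - q ^+ i).

(* N_{u,q}(lambda); the product over i >= 1 is taken over 1 <= i <= |lambda|,
   all further factors being 1. *)
Definition Nuq (R : realType) (u q : R) (l : seq nat) : R :=
  qinf u q * (u ^+ (psize l).-1 * (q ^+ pconj l 1 - 1))
  / \prod_(1 <= i < (psize l).+1) (q ^+ (pconj l i ^ 2) * qpoch q (pmult l i)).

(* Main.v *)
Require Import Defs.
From HB Require Import structures.
From mathcomp Require Import all_boot all_order all_algebra.
From mathcomp Require Import all_classical all_reals all_analysis.
From mathcomp Require Import zify ring lra.
Import Order.TTheory GRing.Theory Num.Theory numFieldNormedType.Exports.
Local Open Scope classical_set_scope.
Local Open Scope ring_scope.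
Definition phi (k s : nat) (v : seq nat) : seq nat :=
  map (addn s) v ++ nseq (k - size v) s.

Lemma geq_trans_rel : transitive geq.
Proof. by move=> a b c /= h1 h2; apply: leq_trans h2 h1. Qed.

Lemma pconj_phi_le k s v i : (size v <= k)%N -> (i <= s)%N ->
  pconj (phi k s v) i = k.
Proof.
move=> hk his; rewrite /pconj /phi count_cat count_map count_nseq /= his mul1n.
rewrite (@eq_count _ _ predT) ?count_predT; first by lia.
by move=> x /=; apply: leq_trans his (leq_addr _ _).
Qed.

Lemma pconj_phi_gt k s v i : (0 < i)%N ->
  pconj (phi k s v) (i + s) = pconj v i.
Proof.
move=> hi; rewrite /pconj /phi count_cat count_map count_nseq /=.
have -> : (i + s <= s)%N = false by lia.
rewrite mul0n addn0; apply: eq_count => x /=; lia.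
Qed.

Lemma pmult_phi_lt k s v i : (i < s)%N -> pmult (phi k s v) i = 0%N.
Proof.
move=> hi; rewrite /pmult /phi count_cat count_map count_nseq /=.
have -> : (s == i) = false by lia.
rewrite mul0n addn0; apply/eqP; rewrite -leqn0 leqNgt -has_count.
by apply/hasPn => x _ /=; lia.
Qed.

Lemma pmult_phi_eq k s v : all (fun x => 0 < x)%N v ->
  pmult (phi k s v) s = (k - size v)%N.
Proof.
move=> hv; rewrite /pmult /phi count_cat count_map count_nseq /= eqxx mul1n.
suff -> : count (fun x => s + x == s)%N v = 0%N by [].
apply/eqP; rewrite -leqn0 leqNgt -has_count.
by apply/hasPn => x /(allP hv) /= ?; lia.
Qed.

Lemma pmult_phi_gt k s v i : (0 < i)%N ->
  pmult (phi k s v) (i + s) = pmult v i.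
Proof.
move=> hi; rewrite /pmult /phi count_cat count_map count_nseq /=.
have -> : (s == i + s) = false by lia.
rewrite mul0n addn0; apply: eq_count => x /=; apply/eqP/eqP; lia.
Qed.

Lemma size_phi k s v : (size v <= k)%N -> size (phi k s v) = k.
Proof. by move=> h; rewrite /phi size_cat size_map size_nseq; lia. Qed.

Lemma psize_phi k s v : (size v <= k)%N -> psize (phi k s v) = (k * s + psize v)%N.
Proof.
move=> h; rewrite /psize /phi sumn_cat sumn_nseq.
have -> : forall w, sumn (map (addn s) w) = (size w * s + sumn w)%N.
  by elim=> [|a w IH] //=; rewrite IH; lia.
rewrite mulnC; nia.
Qed.
Lemma sorted_geq_pairwise (l : seq nat) : sorted geq l = pairwise geq l.
Proof. exact: (sorted_pairwise geq_trans_rel). Qed.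

Lemma pairwise_nseq_geq n (s : nat) : pairwise geq (nseq n s).
Proof. by elim: n => //= n ->; rewrite andbT; apply/allP => x /nseqP [-> _] /=. Qed.

Lemma is_partition_phi k s v : (0 < s)%N -> is_partition v -> (size v <= k)%N ->
  is_partition (phi k s v).
Proof.
move=> hs /andP [hso hpos] hk; apply/andP; split.
  rewrite sorted_geq_pairwise pairwise_cat pairwise_nseq_geq andbT.
  apply/andP; split.
    apply/allrelP => x y /mapP [z _ ->] /nseqP [-> _] /=; lia.
  rewrite pairwise_map; move: hso; rewrite sorted_geq_pairwise.
  by apply: sub_pairwise => a b /=; lia.
rewrite all_cat all_nseq hs orbT andbT all_map.
by apply/allP => x _ /=; lia.
Qed.

Definition psi (l : seq nat) : nat * seq nat :=
  (last 0%N l, seq.filter (fun x => 0 < x)%N (map (subn^~ (last 0%N l)) l)).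

Lemma last_nseq_S (n s : nat) (x : nat) : last x (nseq n.+1 s) = s.
Proof. by elim: n x => //= n IH x; apply: IH. Qed.

Lemma psi_phi k s v : all (fun x => 0 < x)%N v -> (size v < k)%N ->
  psi (phi k s v) = (s, v).
Proof.
move=> hpos hk; rewrite /psi.
have -> : last 0%N (phi k s v) = s.
  rewrite /phi last_cat; have -> : (k - size v = (k - size v).-1.+1)%N by lia.
  exact: last_nseq_S.
congr pair; rewrite /phi map_cat -map_comp map_nseq subnn filter_cat filter_nseq /=.
rewrite cats0 (@eq_map _ _ _ id); last by move=> x /=; lia.
by rewrite map_id; apply/all_filterP.
Qed.

Lemma decomp_sorted (m : seq nat) : sorted geq m ->
  m = seq.filter (fun x => 0 < x)%N m ++ nseq (count (pred1 0%N) m) 0%N.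
Proof.
elim: m => [|a m IH] //= hp.
have hs := path_sorted hp.
have ha := order_path_min geq_trans_rel hp.
case: a hp ha => [|a] hp ha /=.
  have hf : seq.filter (fun x => 0 < x)%N m = [::].
    apply/eqP; rewrite -[_ == _]negbK -has_filter; apply/hasPn => x /(allP ha) /=.
    by lia.
  by rewrite hf /= add0n; congr cons; rewrite {1}(IH hs) hf.
by rewrite add0n /= -IH.
Qed.

Lemma last_le_all (a : nat) (l : seq nat) : path geq a l ->
  forall x, x \in a :: l -> (last a l <= x)%N.
Proof.
elim: l a => [|b l IH] a /=.
  by move=> _ x; rewrite inE => /eqP ->.
move=> /andP [hab hp] x; rewrite inE => /orP [/eqP ->|hx].
  by apply: leq_trans (IH _ hp b (mem_head _ _)) hab.
exact: IH.
Qed.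

Lemma phi_psi k l : is_partition l -> size l = k -> (0 < k)%N ->
  let p := psi l in
  [/\ (0 < p.1)%N, is_partition p.2, (size p.2 < k)%N & phi k p.1 p.2 = l].
Proof.
move=> /andP [hso hpos] hsz hk /=.
case: l hso hpos hsz => [|a l'] hso hpos hsz; first by rewrite -hsz in hk.
set s := last 0%N (a :: l').
have hsin : s \in a :: l' by rewrite /s /= mem_last.
have hge : forall x, x \in a :: l' -> (s <= x)%N by exact: last_le_all.
set m := map (subn^~ s) (a :: l').
have hmso : sorted geq m.
  by apply: (homo_sorted _ _ hso) => x y /=; lia.
have hdec := decomp_sorted _ hmso.
set v := seq.filter (fun x => 0 < x)%N m in hdec *.
set c := count (pred1 0%N) m in hdec *.
have hc : (0 < c)%N.
  rewrite /c -has_count has_pred1; apply/mapP; exists s => //; lia.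
have hsize : size (a :: l') = (size v + c)%N.
  by rewrite -(size_map (subn^~ s)) -/m {1}hdec size_cat size_nseq.
have hl : a :: l' = map (addn s) m.
  rewrite /m -map_comp map_id_in // => x /hge /=; lia.
split.
- by have := allP hpos _ hsin.
- apply/andP; split; first exact: (sorted_filter geq_trans_rel _ hmso).
  exact: filter_all.
- lia.
- rewrite /phi [RHS]hl [in RHS]hdec map_cat map_nseq addn0; congr cat; congr nseq; lia.
Qed.
Section Weights.
Variable R : realType.
Variables q u : R.
Hypothesis hq : 1 < q.

Definition Dp (l : seq nat) (N : nat) : R :=
  \prod_(1 <= i < N.+1) (q ^+ (pconj l i ^ 2) * qpoch q (pmult l i)).

Definition wt (l : seq nat) : R := u ^+ psize l / Dp l (psize l).

Lemma qpoch0 : qpoch q 0 = 1.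
Proof. by rewrite /qpoch big_geq. Qed.

Lemma q_gt0 : 0 < q.
Proof. exact: lt_trans ltr01 hq. Qed.

Lemma qpoch_gt0 n : 0 < qpoch q n.
Proof.
rewrite /qpoch big_seq_cond; apply: prodr_gt0 => j /andP [hj _].
move: hj; rewrite mem_index_iota => /andP [hj _].
rewrite subr_gt0 invf_lt1; last by apply: exprn_gt0; exact: q_gt0.
by rewrite exprn_egt1 //; lia.
Qed.

Lemma Dp_gt0 l N : 0 < Dp l N.
Proof.
rewrite /Dp; apply: prodr_gt0 => i _; apply: mulr_gt0; last exact: qpoch_gt0.
by apply: exprn_gt0; exact: q_gt0.
Qed.

Lemma mem_le_sumn (l : seq nat) x : x \in l -> (x <= sumn l)%N.
Proof.
elim: l => [|a l IH] //=; rewrite inE => /orP [/eqP ->|/IH]; lia.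
Qed.

Lemma Dp_ext l N : (psize l <= N)%N -> Dp l N = Dp l (psize l).
Proof.
move=> h; rewrite -(subnKC h); elim: (N - psize l)%N => [|n IH]; first by rewrite addn0.
rewrite addnS /Dp big_nat_recr /=; last by lia.
rewrite -/(Dp l (psize l + n)) IH.
have -> : pconj l (psize l + n).+1 = 0%N.
  rewrite /pconj; apply/eqP; rewrite -leqn0 leqNgt -has_count; apply/hasPn => x hx /=.
  have := mem_le_sumn _ _ hx; rewrite /psize; lia.
have -> : pmult l (psize l + n).+1 = 0%N.
  rewrite /pmult; apply/eqP; rewrite -leqn0 leqNgt -has_count; apply/hasPn => x hx /=.
  have := mem_le_sumn _ _ hx; rewrite /psize; lia.
by rewrite expr0 mul1r qpoch0 !mulr1.
Qed.

Lemma wt_phi k s v : (0 < k)%N -> (0 < s)%N -> all (fun x => 0 < x)%N v -> (size v <= k)%N ->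
  wt (phi k s v) = (u ^+ k / q ^+ (k ^ 2)) ^+ s / qpoch q (k - size v) * wt v.
Proof.
move=> hk0 hs hpos hk; rewrite /wt psize_phi //.
set N := (k * s + psize v)%N.
have hD : Dp (phi k s v) N =
    (q ^+ (k ^ 2)) ^+ s * qpoch q (k - size v) * Dp v (psize v).
  rewrite /Dp (@big_cat_nat _ _ _ s) /=; [|lia|nia].
  rewrite (@big_ltn _ _ _ s N.+1); last by rewrite /N; nia.
  rewrite -(add1n s) big_addn.
  rewrite (eq_big_nat _ _ (F1 := fun i => q ^+ (pconj (phi k s v) i ^ 2) *
        qpoch q (pmult (phi k s v) i)) (F2 := fun _ => q ^+ (k ^ 2))); last first.
    move=> i hi; rewrite pconj_phi_le //; last by lia.
    by rewrite pmult_phi_lt ?qpoch0 ?mulr1 //; lia.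
  rewrite prodr_const_nat pconj_phi_le // pmult_phi_eq //.
  rewrite (eq_big_nat _ _ (F1 := fun i => q ^+ (pconj (phi k s v) (i + s) ^ 2) *
        qpoch q (pmult (phi k s v) (i + s))) (F2 := fun i => q ^+ (pconj v i ^ 2) *
        qpoch q (pmult v i))); last first.
    by move=> i hi; rewrite pconj_phi_gt ?pmult_phi_gt //; lia.
  have -> : (N.+1 - s = (N - s).+1)%N by rewrite /N; nia.
  rewrite -/(Dp v (N - s)) Dp_ext; last by rewrite /N; nia.
  case: s hs {N} => [|s] // _; rewrite subSS subn0 exprS /Dp; ring.
rewrite hD exprD exprM.
have h1 := Dp_gt0 v (psize v); have h2 := qpoch_gt0 (k - size v).
have h3 : 0 < q ^+ (k ^ 2) by apply: exprn_gt0; exact: q_gt0.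
rewrite expr_div_n !invfM; ring.
Qed.

End Weights.
Arguments wt {R}. Arguments Dp {R}. Arguments q_gt0 {R q}. Arguments qpoch_gt0 {R q}.
Arguments Dp_gt0 {R q}. Arguments wt_phi {R q u}. Arguments Dp_ext {R q}. Arguments qpoch0 {R}.
Section QId.
Variable R : realFieldType.
Variable x : R.

Definition px (j : nat) : R := \prod_(1 <= i < j.+1) (1 - x ^+ i).
Definition pu (u : R) (j : nat) : R := \prod_(1 <= r < j.+1) (1 - u * x ^+ r).
Definition EE (u : R) (j n : nat) : R := \prod_(j.+1 <= r < n.+1) (1 - u * x ^+ r).

Fixpoint qbin (k j : nat) : R :=
  match k, j with
  | 0, 0 => 1
  | 0, _.+1 => 0
  | _.+1, 0 => 1
  | k'.+1, j'.+1 => qbin k' j'.+1 + x ^+ (k' - j') * qbin k' j'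
  end.

Lemma qbin0 k : qbin k 0 = 1.
Proof. by case: k. Qed.

Lemma qbin_gt k j : (k < j)%N -> qbin k j = 0.
Proof.
elim: k j => [|k IH] [|j] //= h.
by rewrite !IH ?mulr0 ?addr0 //; lia.
Qed.

Lemma qbin_diag k : qbin k k = 1.
Proof. by elim: k => //= k ->; rewrite qbin_gt // subnn expr0 mulr1 add0r. Qed.

Lemma px_S n : px n.+1 = px n * (1 - x ^+ n.+1).
Proof. by rewrite /px big_nat_recr. Qed.

Lemma px0 : px 0 = 1.
Proof. by rewrite /px big_geq. Qed.

Lemma qbin_px k j : (j <= k)%N -> qbin k j * px j * px (k - j) = px k.
Proof.
elim: k j => [|k IH] [|j] //= hj.
- by rewrite px0 !mul1r.
- by rewrite px0 !mul1r subn0.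
- rewrite subSS.
  have [hjk|hjk] := ltnP j k; last first.
    have -> : j = k by lia.
    by rewrite qbin_gt // subnn expr0 mul1r add0r qbin_diag mul1r px0 mulr1.
  have h1 := IH j.+1 hjk; have h2 := IH j (ltnW hjk).
  have e : (k - j = (k - j.+1).+1)%N by lia.
  rewrite px_S e px_S -e.
  rewrite e px_S -e in h2.
  have ex : x ^+ (k - j) * x ^+ j.+1 = x ^+ k.+1 by rewrite -exprD; congr (_ ^+ _); lia.
  rewrite px_S.
  transitivity (qbin k j.+1 * px j.+1 * px (k - j.+1) * (1 - x ^+ (k - j)) +
     x ^+ (k - j) * (qbin k j * px j * (px (k - j.+1) * (1 - x ^+ (k - j)))) * (1 - x ^+ j.+1)).
    rewrite px_S; ring.
  by rewrite h1 h2 -ex; ring.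
Qed.

Lemma EE_S u j k : (j <= k)%N -> EE u j k.+1 = EE u j k * (1 - u * x ^+ k.+1).
Proof. by move=> h; rewrite /EE big_nat_recr. Qed.

Lemma EE_shift u j k : EE u j.+1 k.+1 = EE (u * x) j k.
Proof.
rewrite /EE -addn1 big_addn subn1 /=; apply: eq_big_nat => r _.
by rewrite addn1 exprS; congr (1 - _); ring.
Qed.

Lemma EE_diag u k : EE u k k = 1.
Proof. by rewrite /EE big_geq. Qed.

Lemma R_id k : forall u : R,
  \sum_(j < k.+1) qbin k j * (u ^+ j * x ^+ (j ^ 2) * EE u j k) = 1.
Proof.
elim: k => [|k IH] u.
  rewrite big_ord_recl big_ord0 /= EE_diag.
  by have -> : (0 ^ 2 = 0)%N by []; rewrite expr0 !mul1r addr0.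
have HA : \sum_(j < k.+2) qbin k j * (u ^+ j * x ^+ (j ^ 2) * EE u j k.+1)
   = (1 - u * x ^+ k.+1) * \sum_(j < k.+1) qbin k j * (u ^+ j * x ^+ (j ^ 2) * EE u j k).
  rewrite big_ord_recr /= qbin_gt // mul0r addr0 mulr_sumr.
  apply: eq_bigr => j _; rewrite EE_S; last by have := ltn_ord j; lia.
  ring.
have eb : forall i, bump 0 i = i.+1 by move=> i; rewrite /bump leq0n.
rewrite big_ord_recl /= in HA.
move: HA; under eq_bigr => i _ do rewrite eb; move=> HA.
rewrite big_ord_recl /=.
under eq_bigr => j _ do rewrite /bump /= add0n mulrDl.
rewrite big_split /= addrA qbin0 in HA *.
rewrite HA.
have HB : \sum_(i < k.+1) x ^+ (k - i) * qbin k i * (u ^+ i.+1 * x ^+ (i.+1 ^ 2) * EE u i.+1 k.+1)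
   = (u * x ^+ k.+1) * \sum_(j < k.+1) qbin k j * ((u * x) ^+ j * x ^+ (j ^ 2) * EE (u * x) j k).
  rewrite mulr_sumr; apply: eq_bigr => j _; rewrite EE_shift.
  have hj := ltn_ord j.
  have e : x ^+ (k - j) * x ^+ (j.+1 ^ 2) = x ^+ k.+1 * x ^+ j * x ^+ (j ^ 2).
    by rewrite -!exprD; congr (_ ^+ _); nia.
  rewrite exprMn exprS.
  transitivity (u * u ^+ j * (x ^+ (k - j) * x ^+ (j.+1 ^ 2)) * qbin k j * EE (u * x) j k).
    ring.
  rewrite e; ring.
by rewrite HB !IH; ring.
Qed.

Definition ff (u : R) (j : nat) : R := u ^+ j * x ^+ (j ^ 2) / (px j * pu u j).

Lemma pu_split u j k : (j <= k)%N -> pu u k = pu u j * EE u j k.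
Proof. by move=> h; rewrite /pu /EE -big_cat_nat //; lia. Qed.

Lemma ff_id u k : (forall j, px j != 0) -> (forall j, pu u j != 0) ->
  \sum_(j < k.+1) ff u j / px (k - j) = (px k * pu u k)^-1.
Proof.
move=> hpx hpu.
apply: (@mulIf _ (px k * pu u k)); first by rewrite mulf_neq0.
rewrite mulVf ?mulf_neq0 // mulr_suml -[RHS](R_id k u).
apply: eq_bigr => j _; have hj : (j <= k)%N by have := ltn_ord j; lia.
rewrite /ff -(@qbin_px k j hj) (@pu_split u j k hj).
have := hpx j; have := hpx (k - j)%N; have := hpu j => h1 h2 h3.
by field; rewrite ?h1 ?h2 ?h3.
Qed.

End QId.
Arguments px {R}. Arguments pu {R}. Arguments EE {R}. Arguments qbin {R}. Arguments ff {R}.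
Section ESum.
Variable R : realType.
Local Open Scope ereal_scope.

Lemma esumZl (T : choiceType) (S : set T) (a : T -> \bar R) (c : R) :
  (0 <= c)%R -> (forall i, S i -> 0 <= a i) ->
  \esum_(i in S) (c%:E * a i) = c%:E * \esum_(i in S) a i.
Proof.
move=> c0 a0; rewrite /esum -ereal_supZl //; last first.
  apply/set0P; exists 0; exists set0; first exact: fsets_set0.
  exact: fsbig_set0.
congr ereal_sup; rewrite image_comp /=; apply: eq_imagel => A [finA AS] /=.
rewrite !fsbig_finite // !big_seq ge0_sume_distrr // => i.
by rewrite in_fset_set // inE => /AS /a0.
Qed.

Lemma esum_geom (c : R) : (0 <= c)%R -> (c < 1)%R ->
  \esum_(s in [set s : nat | (0 < s)%N]) ((c ^+ s)%R)%:E = ((c / (1 - c))%R)%:E.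
Proof.
move=> c0 c1.
rewrite (reindex_esum [set: nat] _ succn); last first.
  split.
  - by move=> n _ /=.
  - by move=> m n _ _ [].
  - by move=> [|n] //= _; exists n.
rewrite -nneseries_esumT; last by move=> n; rewrite lee_fin exprn_ge0.
have -> : (fun n => \sum_(0 <= i < n) ((c ^+ i.+1)%R)%:E) = EFin \o series (geometric c c).
  apply/funext => n /=; rewrite sumEFin /series /=; congr EFin.
  by apply: eq_bigr => i _; rewrite /geometric /= exprS.
have hc : (`|c| < 1)%R by rewrite ger0_norm.
have hcv := @cvg_geometric_series R c c hc.
rewrite EFin_lim; last exact: is_cvg_geometric_series.
by congr EFin; apply: (cvg_lim _ hcv).
Qed.

Lemma esum_II (a : nat -> \bar R) n : (forall i, 0 <= a i) ->
  \esum_(i in `I_n) a i = \sum_(i < n) a i.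
Proof.
move=> a0; rewrite esum_fset; [by rewrite fsbig_ord | exact: finite_II | by move=> i _].
Qed.

End ESum.
Section Main.
Variable R : realType.
Variables q u : R.
Hypotheses (hq : 1 < q) (hu0 : 0 < u) (hu1 : u < 1).

Let x := q^-1.

Definition Pset (k : nat) := [set l : seq nat | is_partition l /\ size l = k].

Definition FF (k : nat) : \bar R := \esum_(l in Pset k) (wt q u l)%:E.

Lemma x_gt0 : 0 < x.
Proof. by rewrite /x invr_gt0 (q_gt0 hq). Qed.

Lemma x_lt1 : x < 1.
Proof. by rewrite /x invf_lt1 // (q_gt0 hq). Qed.

Lemma qpoch_px n : qpoch q n = px x n.
Proof. by rewrite /qpoch /px; apply: eq_bigr => i _; rewrite /x exprVn. Qed.

Lemma px_neq0 n : px x n != 0.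
Proof. by rewrite -qpoch_px gt_eqF // (qpoch_gt0 hq). Qed.

Lemma pu_gt0 n : 0 < pu x u n.
Proof.
rewrite /pu big_seq_cond; apply: prodr_gt0 => j /andP [hj _].
move: hj; rewrite mem_index_iota => /andP [hj _].
rewrite subr_gt0; have h1 : x ^+ j <= 1 by rewrite exprn_ile1 // ltW // (x_gt0, x_lt1).
by apply: lt_le_trans _ h1; rewrite -[X in _ < X]mul1r ltr_pM2r // exprn_gt0 // x_gt0.
Qed.

Lemma wt_ge0 l : 0 <= wt q u l.
Proof. by rewrite /wt divr_ge0 // ?exprn_ge0 ?ltW // (Dp_gt0 hq). Qed.

Definition fk (k : nat) : R := ff x u k.

Lemma ck_lt1 k : (0 < k)%N -> u ^+ k / q ^+ (k ^ 2) < 1.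
Proof.
move=> hk; have hqk : 1 <= q ^+ (k ^ 2) by rewrite exprn_ege1 // ltW.
have hQ : 0 < q ^+ (k ^ 2) by apply: lt_le_trans hqk.
rewrite ltr_pdivrMr // mul1r; apply: lt_le_trans hqk.
by rewrite exprn_ilt1 ?ltW //; lia.
Qed.

Lemma ck_ge0 k : 0 <= u ^+ k / q ^+ (k ^ 2).
Proof. by rewrite divr_ge0 // exprn_ge0 // ltW // (q_gt0 hq). Qed.

Lemma fk_rec k : (0 < k)%N ->
  let c := u ^+ k / q ^+ (k ^ 2) in
  fk k = c / (1 - c) * \sum_(j < k) fk j / qpoch q (k - j).
Proof.
move=> hk c.
have hid := @ff_id R x u k px_neq0 (fun j => lt0r_neq0 (pu_gt0 j)).
rewrite big_ord_recr /= subnn px0 divr1 in hid.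
have hc1 : c != 1 by rewrite lt_eqF // ck_lt1.
have hc : c = u ^+ k * x ^+ (k ^ 2) by rewrite /c /x exprVn.
have hfk : fk k = c / (px x k * pu x u k) by rewrite /fk /ff hc.
have hS : \sum_(j < k) fk j / qpoch q (k - j) = \sum_(i < k) ff x u i / px x (k - i).
  by apply: eq_bigr => j _; rewrite qpoch_px.
rewrite hS.
have -> : \sum_(i < k) ff x u i / px x (k - i) = (px x k * pu x u k)^-1 - fk k.
  by rewrite -hid /fk addrK.
rewrite hfk.
have h1 := px_neq0 k; have h2 := lt0r_neq0 (pu_gt0 k).
have h3 : 1 - c != 0 by rewrite subr_eq0 eq_sym.
field; rewrite ?h1 ?h2 ?h3 //.
Qed.


Lemma fk_ge0 j : 0 <= fk j.
Proof.
rewrite /fk /ff divr_ge0 //.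
  by rewrite mulr_ge0 // exprn_ge0 // ltW // x_gt0.
by rewrite mulr_ge0 // ltW // ?pu_gt0 // -qpoch_px (qpoch_gt0 hq).
Qed.
Lemma ge0E (r : R) : 0 <= r -> (0 <= r%:E)%E.
Proof. by rewrite lee_fin. Qed.

Lemma Pset0 : Pset 0 = [set [::]].
Proof.
apply/seteqP; split => l /=.
  by case=> _; case: l.
by move=> ->; split.
Qed.

Lemma FF0 : FF 0 = (fk 0)%:E.
Proof.
rewrite /FF Pset0 esum_set1; last by rewrite lee_fin wt_ge0.
congr EFin; rewrite /wt /fk /ff /Dp /px /pu /psize /= !big_geq //.
by rewrite expr0 !mul1r invr1.
Qed.

Lemma Q_bigcup k : [set v : seq nat | is_partition v /\ (size v < k)%N] =
  \bigcup_(j in `I_k) Pset j.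
Proof.
apply/seteqP; split => v /=.
  by case=> hv hs; exists (size v).
by case=> j /= hj [hv hs]; split => //; rewrite hs.
Qed.

Lemma Pset_triv : trivIset setT Pset.
Proof.
by move=> i j _ _ [v [[_ h1] [_ h2]]]; rewrite -h1 -h2.
Qed.

Lemma FF_rec k : (0 < k)%N ->
  (forall j, (j < k)%N -> FF j = (fk j)%:E) ->
  let c := u ^+ k / q ^+ (k ^ 2) in
  FF k = (c / (1 - c) * \sum_(j < k) fk j / qpoch q (k - j))%:E.
Proof.
move=> hk IH c.
set Q := [set v : seq nat | is_partition v /\ (size v < k)%N].
set I := [set s : nat | (0 < s)%N].
have hbij : set_bij (I `*`` (fun _ => Q)) (Pset k) (fun p => phi k p.1 p.2).
  split.
  - move=> [s v] /= [hs [hv hsz]]; split; first exact: (is_partition_phi k s v hs hv (ltnW hsz)).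
    by apply: size_phi; lia.
  - move=> [s v] [s' v'] /set_mem /= [hs [hv hsz]] /set_mem /= [hs' [hv' hsz']] /= he.
    have e1 := psi_phi k s v (andP hv).2 hsz; have e2 := psi_phi k s' v' (andP hv').2 hsz'.
    by rewrite -e1 -e2 he.
  - move=> l /= [hl hsz]; have [h1 h2 h3 h4] := phi_psi k l hl hsz hk.
    by exists (psi l) => //.
rewrite /FF (reindex_esum _ _ _ _ hbij) /=.
set g := fun v : seq nat => wt q u v / qpoch q (k - size v).
have hg0 : forall v, 0 <= g v.
  by move=> v; rewrite /g divr_ge0 ?wt_ge0 // ltW // (qpoch_gt0 hq).
transitivity (\esum_(p in I `*`` (fun _ => Q)) ((c ^+ p.1)%:E * (g p.2)%:E)%E).
  apply: eq_esum => [[s v]] /= [hs [hv hsz]].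
  rewrite wt_phi //; last by lia.
    by rewrite -EFinM /c /g; congr EFin; ring.
  exact: (andP hv).2.
rewrite -(esum_esum (I := I) (J := fun _ => Q) (a := fun s v => ((c ^+ s)%:E * (g v)%:E)%E)); last first.
  move=> s v _ _ /=; rewrite -EFinM; apply: ge0E.
  by rewrite mulr_ge0 // exprn_ge0 // ck_ge0.
have hG : \esum_(v in Q) (g v)%:E = (\sum_(j < k) fk j / qpoch q (k - j))%:E.
  rewrite /Q Q_bigcup esum_bigcupT; [|exact: Pset_triv|by move=> v; apply: ge0E].
  transitivity (\esum_(j in `I_k) ((fk j / qpoch q (k - j))%:E)).
    apply: eq_esum => j /= hj.
    transitivity (\esum_(v in Pset j) (((qpoch q (k - j))^-1)%:E * (wt q u v)%:E)%E).
      apply: eq_esum => v [_ hs]; rewrite -EFinM /g hs mulrC //.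
    rewrite esumZl; last by move=> v _; rewrite lee_fin wt_ge0.
      by rewrite -/(FF j) IH // -EFinM mulrC.
    by rewrite invr_ge0 ltW // (qpoch_gt0 hq).
  rewrite esum_II; last by move=> j; apply: ge0E; rewrite divr_ge0 // ?fk_ge0 // ltW // (qpoch_gt0 hq).
  by rewrite sumEFin.
set G := \sum_(j < k) fk j / qpoch q (k - j) in hG *.
have hG0 : 0 <= G.
  by apply: sumr_ge0 => j _; rewrite divr_ge0 // ?fk_ge0 // ltW // (qpoch_gt0 hq).
transitivity (\esum_(s in I) (G%:E * (c ^+ s)%:E)%E).
  apply: eq_esum => s _ /=; rewrite esumZl; last by move=> v _; apply: ge0E.
    by rewrite hG muleC.
  by rewrite exprn_ge0 // ck_ge0.
rewrite esumZl //; last by move=> s _; apply: ge0E; rewrite exprn_ge0 // ck_ge0.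
rewrite esum_geom ?ck_ge0 ?ck_lt1 // -EFinM; congr EFin; exact: mulrC.
Qed.

Lemma FF_val k : FF k = (fk k)%:E.
Proof.
elim/ltn_ind: k => k IH.
case: k IH => [|k] IH; first exact: FF0.
rewrite FF_rec //; congr EFin; rewrite -fk_rec //.
Qed.
Lemma fac_gt0 r : 0 < 1 - u / q ^+ r.
Proof.
have hqr : 1 <= q ^+ r by rewrite exprn_ege1 // ltW.
have hQ : 0 < q ^+ r by apply: lt_le_trans hqr.
rewrite subr_gt0 ltr_pdivrMr // mul1r; exact: lt_le_trans hu1 hqr.
Qed.

Lemma fac_le1 r : 1 - u / q ^+ r <= 1.
Proof.
rewrite lerBlDr lerDl divr_ge0 // ?ltW //; apply: exprn_gt0; exact: (q_gt0 hq).
Qed.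

Lemma qinf_ge0 : 0 <= qinf u q.
Proof.
rewrite /qinf.
set a := fun n => \prod_(1 <= r < n.+1) (1 - u / q ^+ r).
have a0 : forall n, 0 <= a n.
  by move=> n; apply: prodr_ge0 => r _; apply: ltW; exact: fac_gt0.
have hdec : nonincreasing_seq a.
  apply/nonincreasing_seqP => n; rewrite /a big_nat_recr //=.
  by rewrite -[X in _ <= X]mulr1 ler_wpM2l // ?fac_le1 // -/(a n).
have hcv : cvgn a.
  apply: nonincreasing_is_cvgn => //; exists 0 => _ [n _ <-]; exact: a0.
apply: limr_ge => //; exact: nearW.
Qed.

Lemma pu_prod k : pu x u k = \prod_(1 <= r < k.+1) (1 - u / q ^+ r).
Proof. by apply: eq_bigr => r _; rewrite /x exprVn. Qed.

Lemma AO n : (q ^+ n.+1 - 1) * affine_order n q = q ^+ (n.+1 ^ 2) * qpoch q n.+1.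
Proof.
have hq0 : q != 0 by rewrite gt_eqF // (q_gt0 hq).
rewrite /affine_order.
have L1 : q ^+ n * \prod_(0 <= i < n) (q ^+ n - q ^+ i) =
    \prod_(1 <= i < n.+1) (q ^+ n.+1 - q ^+ i).
  rewrite big_add1 /= -{1}(subn0 n) -prodr_const_nat -big_split /=.
  by apply: eq_bigr => i _; rewrite !exprS; ring.
rewrite L1.
rewrite -[q ^+ n.+1 - 1]/(q ^+ n.+1 - q ^+ 0) -(@big_ltn _ _ _ 0 n.+1 (fun i => q ^+ n.+1 - q ^+ i)) //.
have R1 : q ^+ (n.+1 ^ 2) = \prod_(1 <= j < n.+2) q ^+ n.+1.
  by rewrite prodr_const_nat -exprM; congr (_ ^+ _); rewrite subn1 /= expnS expn1.
rewrite R1 /qpoch -big_split /=.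
rewrite big_add1 /= big_nat_rev /=.
apply: eq_big_nat => i /andP [_ hi].
have -> : (0 + n.+1 - i.+1 = n - i)%N by lia.
have e : q ^+ n.+1 = q ^+ (n - i) * q ^+ i.+1 by rewrite -exprD; congr (_ ^+ _); lia.
rewrite e mulrBr mulr1 -mulrA mulfV ?mulr1 //; exact: expf_neq0.
Qed.

Lemma pconj1 l : is_partition l -> pconj l 1 = size l.
Proof. by move=> /andP [_ h]; apply/eqP; rewrite -all_count. Qed.

Lemma psize_pos l k : Pset k l -> (0 < k)%N -> (0 < psize l)%N.
Proof.
case: l => [|a l] [/andP [_ hpos] hs] hk; first by rewrite -hs in hk.
move: hpos => /= /andP [ha _]; rewrite /psize /=; lia.
Qed.

Lemma main_sec k : (1 <= k)%N ->
  \esum_(l in [set l : seq nat | is_partition l /\ pconj l 1 = k]) (Nuq u q l)%:E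
  = ((u ^+ (k - 1) / affine_order (k - 1) q)
     * (qinf u q / \prod_(1 <= r < k.+1) (1 - u / q ^+ r)))%:E.
Proof.
move=> hk.
have -> : [set l : seq nat | is_partition l /\ pconj l 1 = k] = Pset k.
  apply/seteqP; split => l /= [hl h]; split => //; by rewrite ?pconj1 // -?pconj1.
have hq1 : 0 < q ^+ k - 1 by rewrite subr_gt0 exprn_egt1 //; lia.
set K := qinf u q * (q ^+ k - 1) / u.
have hK : 0 <= K.
  rewrite /K divr_ge0 //; last exact: ltW.
  apply: mulr_ge0; [exact: qinf_ge0|exact: ltW].
transitivity (\esum_(l in Pset k) (K%:E * (wt q u l)%:E)%E).
  apply: eq_esum => l hl; rewrite -EFinM; congr EFin.
  have hp := psize_pos l k hl hk.
  have hc : pconj l 1 = k by case: hl => hl <-; exact: pconj1.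
  rewrite /Nuq /wt /Dp /K hc.
  case: (psize l) hp => [|p] // _; rewrite exprS /=.
  have := Dp_gt0 hq l p.+1; rewrite /Dp => hD.
  have hu : u != 0 by rewrite gt_eqF.
  field; rewrite ?hu ?gt_eqF //.
rewrite esumZl //; last by move=> l _; apply: ge0E; exact: wt_ge0.
rewrite -/(FF k) FF_val -EFinM; congr EFin.
rewrite /K; clear hK K.
case: k hk hq1 => [|n] // _ hq1.
rewrite subn1 /= -pu_prod.
have hAO := AO n.
have hqp := qpoch_gt0 hq n.+1.
have hpu := pu_gt0 n.+1.
have hqk : 0 < q ^+ (n.+1 ^ 2) by apply: exprn_gt0; exact: (q_gt0 hq).
have hA : affine_order n q = q ^+ (n.+1 ^ 2) * qpoch q n.+1 / (q ^+ n.+1 - 1).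
  by rewrite -hAO [_ * affine_order n q]mulrC mulfK // gt_eqF.
rewrite hA /fk /ff -qpoch_px /x exprVn (exprS u).
have hu : u != 0 by rewrite gt_eqF.
move: hqp hpu hqk hq1.
set P := pu _ u n.+1; set Q2 := q ^+ (n.+1 ^ 2); set QP := qpoch q n.+1.
set I := qinf u q; set qn := q ^+ n.+1; set un := u ^+ n.
move=> hqp hpu hqk hq1.
field; rewrite ?hu ?gt_eqF //.
Qed.

End Main.

Theorem theorem4p2 (R : realType) (q u : R) (k : nat) :
  1 < q -> 0 < u -> u < 1 -> (1 <= k)%N ->
  \esum_(l in [set l : seq nat | is_partition l /\ pconj l 1 = k]) (Nuq u q l)%:E
  = ((u ^+ (k - 1) / affine_order (k - 1) q)
     * (qinf u q / \prod_(1 <= r < k.+1) (1 - u / q ^+ r)))%:E.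
Proof. move=> hq hu0 hu1 hk; exact: main_sec. Qed.
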